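(* For every finite partial IP loop $P$ there exists a finite partial IP loop $Q$ with $P\le Q$ and $3\mid o_3(Q)$.
   Context: A partial IP loop is a set $P$ with a partial binary operation $(x,y)\mapsto xy$ defined on a subset $D(P)\subseteq P\times P$ (the domain) such that: (1) there is $1\in P$ with $(1,x),(x,1)\in D(P)$ and $1x=x1=x$ for all $x\in P$; (2) for each $x\in P$ there is a unique $y\in P$, denoted $x^{-1}$, with $(x,y),(y,x)\in D(P)$ and $xy=yx=1$; (3) whenever $(x,y)\in D(P)$, we have $(x^{-1},xy),(xy,y^{-1})\in D(P)$ and $x^{-1}(xy)=y$, $(xy)y^{-1}=x$. A partial IP loop $(Q,* )$ extends $(P,\cdot)$ (written $P\le Q$) if $P\subseteq Q$, $D(P)\subseteq D(Q)$ and $x\cdot y=x*y$ for all $(x,y)\in D(P)$. $O_3(P)=\{x\in P: (x,x)\in D(P),\ (x,xx)\in D(P),\ x\neq 1,\ x(xx)=1\}$ and $o_3(P)=\#O_3(P)$. *)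

(* Defs.v *)
From mathcomp Require Import all_boot.
Set Implicit Arguments. Unset Strict Implicit. Unset Printing Implicit Defensive.

(* A partial binary operation on T is encoded as [m : T -> T -> option T]:
   (x,y) is in the domain D iff [m x y] is [Some _], and then xy is its value.
   [e] is the identity element 1. *)

Definition is_inv (T : Type) (m : T -> T -> option T) (e x y : T) : Prop :=
  m x y = Some e /\ m y x = Some e.

Definition is_partial_IP_loop (T : Type) (m : T -> T -> option T) (e : T) : Prop :=
  (forall x, m e x = Some x /\ m x e = Some x) /\
  (forall x, exists y, is_inv m e x y /\ forall y', is_inv m e x y' -> y' = y) /\
  (forall x y z xi yi, m x y = Some z -> is_inv m e x xi -> is_inv m e y yi ->
     m xi z = Some y /\ m z yi = Some x).

Definition O3 (T : finType) (m : T -> T -> option T) (e : T) : pred T :=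
  fun x => (x != e) &&
    match m x x with
    | Some xx => m x xx == Some e
    | None => false
    end.

Definition o3 (T : finType) (m : T -> T -> option T) (e : T) : nat := #|O3 m e|.

(* Main.v *)
Require Import Defs.
From mathcomp Require Import all_boot.

Section Constr.
Variables (T : finType) (m : T -> T -> option T) (e : T) (n : nat).

Definition U := (T + ('I_n * bool))%type.

Definition mU (u v : U) : option U :=
  match u, v with
  | inl x, inl y => option_map inl (m x y)
  | inl x, inr p => if x == e then Some (inr p) else None
  | inr p, inl y => if y == e then Some (inr p) else None
  | inr (i, s), inr (j, t) =>
      if i == j then (if s == t then Some (inr (i, ~~ s)) else Some (inl e))
      else None
  end.

Hypothesis HP : is_partial_IP_loop m e.

Lemma inv_e ei : is_inv m e e ei -> ei = e.
Proof.
case: HP => [Hid [Hinv _]] H.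
have [y [_ Hu]] := Hinv e.
rewrite (Hu _ H); symmetry; apply: Hu; split; apply Hid.
Qed.

Lemma inv_char (x : U) (u : U) : is_inv mU (inl e) x u ->
  match x with
  | inl x => exists x', u = inl x' /\ is_inv m e x x'
  | inr (i, s) => u = inr (i, ~~ s)
  end.
Proof.
case: x => [x|[i s]]; case: u => [y|[j t]] /=; rewrite /is_inv /=.
- case E1: (m x y) => [a|]; case E2: (m y x) => [b|] //=; try by case=> -[].
  case=> [[Ea] [Eb]]; exists y; by rewrite E1 E2 Ea Eb.
- by case: (x == e) => -[[]].
- by case: (y == e) => -[[]].
- case: (i =P j) => [<-|]; last by move=> _ -[[]].
  rewrite eqxx; case: (s =P t) => [->|st]; first by rewrite eqxx => -[[]].
  move=> _.
  by case: s t st => [] [].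
Qed.

Lemma mU_IP : is_partial_IP_loop mU (inl e).
Proof.
have HP' := HP; case: HP' => [Hid [Hinv H3]].
split; last split.
- case=> [x|p] /=; last by case: p => i s; rewrite eqxx; split.
  by case: (Hid x) => -> ->.
- case=> [x|[i s]].
  + have [y [[h1 h2] Hu]] := Hinv x.
    exists (inl y); split; first by rewrite /is_inv /= h1 h2.
    move=> y' /inv_char [x' [-> Hx']]; by rewrite (Hu _ Hx').
  + exists (inr (i, ~~ s)); split.
      by rewrite /is_inv /= eqxx; case: s.
    by move=> y' /inv_char.
- move=> x y z xi yi Hxy /inv_char Hxi /inv_char Hyi.
  case: x y Hxy Hxi Hyi => [x|[i s]] [y|[j t]] /=.
  + case Em: (m x y) => [z'|] //= [<-] [x' [-> Hx]] [y' [-> Hy]] /=.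
    by case: (H3 _ _ _ _ _ Em Hx Hy) => -> ->.
  + case: (x =P e) => // -> [<-] [x' [-> /inv_e ->]] -> /=.
    by rewrite !eqxx; case: t.
  + case: (y =P e) => // -> [<-] -> [y' [-> /inv_e ->]] /=.
    by rewrite !eqxx negbK; case: s.
  + case: (i =P j) => // <-; case: (s =P t) => [<-|st] [<-] -> -> /=.
      by rewrite eqxx /= negbK; case: s => /=.
    have -> : t = ~~ s by case: s t st => [] [].
    by clear st; rewrite !eqxx negbK; case: s.
Qed.

Lemma O3_inl x : O3 mU (inl e) (inl x) = O3 m e x.
Proof.
rewrite /O3 /=. have -> : (inl x != inl e :> U) = (x != e) by [].
case: (m x x) => [xx|] //=.
by case: (m x xx) => [a|] //=.
Qed.

Lemma O3_inr p : O3 mU (inl e) (inr p).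
Proof.
case: p => i s; rewrite /O3 /= !eqxx /=.
by case: s; rewrite /= eqxx.
Qed.

Lemma o3U : o3 mU (inl e) = o3 m e + 2 * n.
Proof.
rewrite /o3 -!sum1_card big_sumType /=.
congr (_ + _).
    by apply: eq_bigl => x; exact: O3_inl.
rewrite (eq_bigl predT); last by move=> p; exact: O3_inr.
by rewrite sum1_card card_prod card_ord card_bool mulnC.
Qed.

End Constr.

Theorem proposition1 (T : finType) (m : T -> T -> option T) (e : T) :
  is_partial_IP_loop m e ->
  exists (U : finType) (m' : U -> U -> option U) (e' : U) (f : T -> U),
    [/\ is_partial_IP_loop m' e',
        injective f,
        (forall x y z, m x y = Some z -> m' (f x) (f y) = Some (f z))
      & 3 %| o3 m' e'].
Proof.
move=> HP.
exists (U T (o3 m e)), (@mU T m e (o3 m e)), (inl e), inl.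
split.
- exact: mU_IP.
- by move=> x y [].
- by move=> x y z /= ->.
- rewrite o3U.
  have -> : o3 m e + 2 * o3 m e = 3 * o3 m e by rewrite mulSn.
  exact: dvdn_mulr.
Qed.
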